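(* Let $M,N,d$ be positive integers with $d>N$. For $i=1,\dots,M$ let $X_i\in\mathbb{R}^{N\times d}$ have full row rank $N$, let $w_i^*\in\mathbb{R}^d$, $z_i\in\mathbb{R}^N$, and $y_i = X_i w_i^* + z_i\in\mathbb{R}^N$. Consider Local-GD for linear regression: given $w_0^0\in\mathbb{R}^d$, for $k=0,1,2,\dots$ each node $i$ runs gradient descent $w\mapsto w-\eta\nabla f_i(w)$ on $f_i(w)=\frac{1}{2N}\|y_i-X_iw\|^2$ initialized at $w_0^k$, with a constant step size $\eta$ small enough for convergence, until convergence, and sets $w_i^{k+1}$ to be the limit of these iterates; then $w_0^{k+1}=\frac1M\sum_{i=1}^M w_i^{k+1}$. Let $P_i=X_i^T(X_iX_i^T)^{-1}X_i$, $X_i^{\dagger}=X_i^T(X_iX_i^T)^{-1}$, $\bar P=\frac1M\sum_{i=1}^M P_i$, $\bar Q=\frac1M\sum_{i=1}^M P_iw_i^*$, $\bar Z=\frac1M\sum_{i=1}^M X_i^{\dagger}z_i$. Then for every $K\ge 0$, $$w_0^K=(I-\bar P)^K w_0^0+\sum_{k=0}^{K-1}(I-\bar P)^k(\bar Q+\bar Z).$$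
   Context: This is the distributed setting with $M$ compute nodes, node $i$ holding the data matrix $X_i$ (rows are samples) and label vector $y_i$; ''local models are exactly solved'' means each local gradient descent is run to convergence in every communication round. $I$ denotes the $d\times d$ identity. *)

(* Defs.v *)
From HB Require Import structures.
From mathcomp Require Import all_boot all_order all_algebra.
From mathcomp Require Import all_classical all_reals all_analysis.
Import numFieldNormedType.Exports.
Set Implicit Arguments. Unset Strict Implicit. Unset Printing Implicit Defensive.
Import Order.TTheory GRing.Theory Num.Theory.
Local Open Scope ring_scope.
Local Open Scope classical_set_scope.

Section LocalGD.
Variables (R : realType) (N d : nat).

(* gradient of f(w) = 1/(2N) ||y - X w||^2, namely -(1/N) X^T (y - X w) *)
Definition lsq_grad (X : 'M[R]_(N, d)) (y : 'cV[R]_N) (w : 'cV[R]_d) : 'cV[R]_d :=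
  - ((N%:R)^-1 *: (X^T *m (y - X *m w))).

Fixpoint gd_iter (eta : R) (X : 'M[R]_(N, d)) (y : 'cV[R]_N) (w0 : 'cV[R]_d)
  (t : nat) : 'cV[R]_d :=
  match t with
  | 0 => w0
  | t'.+1 => let w := gd_iter eta X y w0 t' in w - eta *: lsq_grad X y w
  end.

Definition local_solve (eta : R) (X : 'M[R]_(N, d)) (y : 'cV[R]_N)
  (w0 : 'cV[R]_d) : 'cV[R]_d :=
  limn (gd_iter eta X y w0).

Fixpoint localgd_global (M : nat) (eta : R) (X : 'I_M -> 'M[R]_(N, d))
  (y : 'I_M -> 'cV[R]_N) (w00 : 'cV[R]_d) (k : nat) : 'cV[R]_d :=
  match k with
  | 0 => w00
  | k'.+1 => let w := localgd_global eta X y w00 k' in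
             (M%:R)^-1 *: \sum_(i < M) local_solve eta (X i) (y i) w
  end.

End LocalGD.

Definition mxpow (R : pzRingType) (d : nat) (A : 'M[R]_d) (k : nat) : 'M[R]_d :=
  iter k (mulmx A) 1%:M.

Definition proj_row (R : fieldType) (N d : nat) (X : 'M[R]_(N, d)) : 'M[R]_d :=
  X^T *m invmx (X *m X^T) *m X.

Definition pinv_row (R : fieldType) (N d : nat) (X : 'M[R]_(N, d)) : 'M[R]_(d, N) :=
  X^T *m invmx (X *m X^T).

(* Main.v *)
Require Import Defs.
From HB Require Import structures.
From mathcomp Require Import all_boot all_order all_algebra.
From mathcomp Require Import all_classical all_reals all_analysis.
Import numFieldNormedType.Exports.
Import Order.TTheory GRing.Theory Num.Theory.
Local Open Scope ring_scope.
Local Open Scope classical_set_scope.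

Lemma cvg_sumR (R : realType) (I : Type) (r : seq I) (f : I -> nat -> R) (a : I -> R) :
  (forall i, f i n @[n --> \oo] --> a i) ->
  (\sum_(i <- r) f i n) @[n --> \oo] --> \sum_(i <- r) a i.
Proof.
move=> h; elim: r => [|i r IH].
  rewrite big_nil; under eq_cvg do rewrite big_nil; exact: cvg_cst.
rewrite big_cons; under eq_cvg do rewrite big_cons.
exact: cvgD.
Qed.

Lemma entry_cvg (R : realType) (d : nat) (u : nat -> 'cV[R]_d) (A : 'M[R]_d) i :
  cvgn u -> (A *m u t) i 0 @[t --> \oo] --> (A *m limn u) i 0.
Proof.
move=> cu.
have e : forall k, u t k 0 @[t --> \oo] --> limn u k 0.
  move=> k; have := cvg_comp _ _ cu (@coord_continuous R d 1 k 0 (limn u)). exact.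
under eq_cvg do rewrite mxE.
rewrite mxE; apply: cvg_sumR => k; apply: cvgMr; exact: e.
Qed.

Lemma lim_affine (R : realType) (d : nat) (u : nat -> 'cV[R]_d) (B : 'M[R]_d) b :
  cvgn u -> (forall t, u t.+1 = B *m u t + b) -> limn u = B *m limn u + b.
Proof.
move=> cu hu; apply/matrixP => i j; rewrite (ord1 j).
have h1 : u t.+1 i 0 @[t --> \oo] --> limn u i 0.
  have := @entry_cvg R d u 1%:M i cu; rewrite mul1mx.
  under eq_cvg do rewrite mul1mx.
  by rewrite -(cvg_shiftS (fun t => u t i 0)).
have h2 : u t.+1 i 0 @[t --> \oo] --> (B *m limn u + b) i 0.
  under eq_cvg do rewrite hu mxE.
  rewrite mxE; apply: cvgD; [exact: (@entry_cvg R d u B i cu) | exact: cvg_cst].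
exact: (cvg_unique _ h1 h2).
Qed.

Lemma lim_const (R : realType) (d : nat) (u : nat -> 'cV[R]_d) (A : 'M[R]_d) c :
  cvgn u -> (forall t, A *m u t = c) -> A *m limn u = c.
Proof.
move=> cu hu; apply/matrixP => i j; rewrite (ord1 j).
have h1 := @entry_cvg R d u A i cu.
have h2 : (A *m u t) i 0 @[t --> \oo] --> c i 0.
  under eq_cvg do rewrite hu.
  exact: cvg_cst.
exact: (cvg_unique _ h1 h2).
Qed.
Lemma gram_unit (R : realType) N d (X : 'M[R]_(N, d)) :
  \rank X = N -> X *m X^T \in unitmx.
Proof.
move=> hr; have rf : row_free X by rewrite /row_free hr.
rewrite -row_free_unit; apply: inj_row_free => v hv.
have w0 : v *m X = 0.
  have e : (v *m X) *m (v *m X)^T = 0 by rewrite trmx_mul mulmxA -(mulmxA v) hv mul0mx.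
  have e00 := congr1 (fun M : 'M[R]_1 => M 0 0) e; rewrite /= !mxE in e00.
  apply/matrixP => i j; rewrite (ord1 i) [RHS]mxE.
  have : \sum_(k < d) (v *m X) 0 k * (v *m X) 0 k == 0.
    apply/eqP; rewrite -[RHS]e00; apply: eq_bigr => k _; by rewrite [(_)^T _ _]mxE.
  rewrite psumr_eq0; last by move=> k _; rewrite -expr2 sqr_ge0.
  by move=> /allP /(_ j (mem_index_enum _)) /implyP /(_ isT); rewrite mulf_eq0 orbb => /eqP.
by apply/eqP; rewrite -(mulmx_free_eq0 _ rf) w0.
Qed.

Lemma local_solve_eq (R : realType) N d (X : 'M[R]_(N, d)) y w eta :
  (0 < N)%N -> \rank X = N -> 0 < eta -> cvgn (gd_iter eta X y w) ->
  local_solve eta X y w = (1%:M - proj_row X) *m w + pinv_row X *m y.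
Proof.
move=> hN hr heta cu.
have rf : row_free X by rewrite /row_free hr.
have GU := @gram_unit R N d X hr.
set u := gd_iter eta X y w.
set c := eta / N%:R.
have c0 : c != 0 by rewrite mulf_neq0 // ?invr_eq0 gt_eqF // ?ltr0n.
have step : forall t, u t.+1 = u t + c *: (X^T *m (y - X *m u t)).
  by move=> t; rewrite /u /= /lsq_grad scalerN opprK scalerA.
have PX : proj_row X *m X^T = X^T.
  by rewrite /proj_row -!mulmxA mulVmx // mulmx1.
have cst : forall t, (1%:M - proj_row X) *m u t = (1%:M - proj_row X) *m w.
  elim => [|t IH] //; rewrite step mulmxDr IH -scalemxAr mulmxA [(_ - _) *m X^T]mulmxBl mul1mx PX subrr mul0mx scaler0 addr0 //.
have L1 := @lim_const R d u _ _ cu cst.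
have L2 : limn u = (1%:M - c *: (X^T *m X)) *m limn u + c *: (X^T *m y).
  apply: (@lim_affine R d u) => // t; rewrite step mulmxBl mul1mx mulmxBr -scalemxAl mulmxA scalerBr; rewrite addrA.
  by rewrite [_ - _ + _]addrAC.
have XL : X *m limn u = y.
  move: L2; rewrite mulmxBl mul1mx -scalemxAl -mulmxA -addrA [- _ + _]addrC -scalerBr -mulmxBr => L2.
  have h0 : c *: (X^T *m (y - X *m limn u)) = 0.
    by apply/(addrI (limn u)); rewrite addr0 -L2.
  move/eqP: h0; rewrite scaler_eq0 (negbTE c0) /= => /eqP h.
  have : (y - X *m limn u)^T *m X = 0 by rewrite -[Z in _ *m Z]trmxK -trmx_mul h trmx0.
  move/eqP; rewrite mulmx_free_eq0 // trmx_eq0 subr_eq0 => /eqP ->. done.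
rewrite /local_solve -/u -L1 mulmxBl mul1mx /pinv_row /proj_row -[_ *m X *m limn u]mulmxA XL.
by rewrite subrK.
Qed.
Theorem lemma1 (R : realType) (M N d : nat) (hM : (0 < M)%N) (hN : (0 < N)%N)
  (hNd : (N < d)%N)
  (X : 'I_M -> 'M[R]_(N, d)) (wstar : 'I_M -> 'cV[R]_d) (z : 'I_M -> 'cV[R]_N)
  (y : 'I_M -> 'cV[R]_N) (w00 : 'cV[R]_d) (eta : R)
  (hrank : forall i, \rank (X i) = N)
  (hy : forall i, y i = X i *m wstar i + z i)
  (heta : 0 < eta)
  (hconv : forall i (w : 'cV[R]_d), cvgn (gd_iter eta (X i) (y i) w)) :
  let Pbar := (M%:R)^-1 *: \sum_(i < M) proj_row (X i) in
  let Qbar := (M%:R)^-1 *: \sum_(i < M) (proj_row (X i) *m wstar i) in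
  let Zbar := (M%:R)^-1 *: \sum_(i < M) (pinv_row (X i) *m z i) in
  forall K : nat,
    localgd_global eta X y w00 K =
      mxpow (1%:M - Pbar) K *m w00
      + \sum_(k < K) (mxpow (1%:M - Pbar) k *m (Qbar + Zbar)).
Proof.
move=> Pbar Qbar Zbar.
have M0 : (M%:R : R) != 0 by rewrite pnatr_eq0 -lt0n.
have step : forall w, (M%:R)^-1 *: \sum_(i < M) local_solve eta (X i) (y i) w
    = (1%:M - Pbar) *m w + (Qbar + Zbar).
  move=> w.
  have e : forall i, local_solve eta (X i) (y i) w
      = w - proj_row (X i) *m w + (proj_row (X i) *m wstar i + pinv_row (X i) *m z i).
    move=> i; rewrite (@local_solve_eq R N d) // mulmxBl mul1mx hy mulmxDr mulmxA.
    by rewrite /pinv_row /proj_row.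
  rewrite (eq_bigr _ (fun i _ => e i)) !big_split /=.
  rewrite sumrN sumr_const card_ord -mulmx_suml /Qbar /Zbar /Pbar !scalerDr scalerN -[w *+ M](@scaler_nat R) scalerA mulVf // scale1r.
  by rewrite mulmxBl mul1mx -scalemxAl.
elim => [|K IH].
  by rewrite /= big_ord0 addr0 mul1mx.
rewrite /= IH step big_ord_recl /= mul1mx mulmxDr mulmxA mulmx_sumr.
rewrite [Z in _ = _ + Z]addrC -addrA; congr (_ + (_ + _)).
by apply: eq_bigr => k _; rewrite mulmxA.
Qed.
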